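(* Let $V$ be a finite-dimensional real vector space and let $(\zeta,Z)$ be the universal 2-connection valued in $\mathbf T(V)$. For any 2-connection $(\alpha,\gamma)$ on $V$ valued in a crossed module of algebras $\mathbf A=(\delta^A:A_1\to A_0,\gtrdot,\lessdot)$, there exists a unique morphism of crossed modules of algebras $(\widetilde\alpha,\widetilde\gamma):\mathbf T(V)\to\mathbf A$ such that $\alpha=\widetilde\alpha\circ\zeta$ and $\gamma=\widetilde\gamma\circ Z$.
   Context: A crossed module of algebras $\mathbf A=(\delta^A:A_1\to A_0,\gtrdot,\lessdot)$ consists of a unital algebra $(A_0,\cdot,1)$, an algebra $(A_1,* )$ (not necessarily unital) which is an $A_0$-bimodule via left/right actions $\gtrdot,\lessdot$, such that $a\gtrdot(E*E')=(a\gtrdot E)*E'$, $(E*E')\lessdot a=E*(E'\lessdot a)$, $(E\lessdot a)*(a'\gtrdot E')=E*((a\cdot a')\gtrdot E')=(E\lessdot(a\cdot a'))*E'$, together with an algebra morphism $\delta^A$ satisfying $\delta^A(a\gtrdot E)=a\cdot\delta^A(E)$, $\delta^A(E\lessdot a)=\delta^A(E)\cdot a$, and $\delta^A(E)\gtrdot E'=E*E'=E\lessdot\delta^A(E')$. A morphism $(f_1,f_0):\mathbf A\to\mathbf B$ consists of algebra morphisms $f_0:A_0\to B_0$, $f_1:A_1\to B_1$ with $\delta^B\circ f_1=f_0\circ\delta^A$, $f_1(a\gtrdot E)=f_0(a)\gtrdot f_1(E)$, $f_1(E\lessdot a)=f_1(E)\lessdot f_0(a)$. A 2-connection on $V$ valued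 in $\mathbf A$ is a pair of linear maps $\alpha:V\to A_0$, $\gamma:\Lambda^2V\to A_1$ with $\delta^A\circ\gamma=[\alpha,\alpha]$, i.e. $\delta^A(\gamma(v\wedge w))=\alpha(v)\alpha(w)-\alpha(w)\alpha(v)$. $\mathbf T(V)$: $T_0(V)=\bigoplus_{n\ge0}V^{\otimes n}$ is the tensor algebra; on the free bimodule $T_0(V)\otimes\Lambda^2V\otimes T_0(V)$ (actions by multiplication on the outer factors) define $\delta(a\otimes(v\wedge w)\otimes b)=a\cdot(v\cdot w-w\cdot v)\cdot b$; let $\mathrm{Pf}$ be the span of $\delta(E)\cdot F-E\cdot\delta(F)$ for all $E,F$; $T_1(V)=(T_0(V)\otimes\Lambda^2V\otimes T_0(V))/\mathrm{Pf}$ with the induced actions and $\delta$, and product $E*F=\delta(E)\cdot F=E\cdot\delta(F)$; $\mathbf T(V)=(\delta:T_1(V)\to T_0(V),\cdot,\cdot)$ is a crossed module of algebras. The universal 2-connection is $\zeta:V\to T_0(V)$ the inclusion and $Z:\Lambda^2V\to T_1(V)$, $Z(v\wedge w)=$ class of $1\otimes(v\wedge w)\otimes1$. *)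

(* Defs.v *)
From HB Require Import structures.
From mathcomp Require Import all_boot all_algebra finmap generic_quotient.
From mathcomp.multinomials Require Import monalg.
From mathcomp.classical Require Import boolp.

Set Implicit Arguments.
Unset Strict Implicit.
Unset Printing Implicit Defensive.

Import GRing.Theory.
Local Open Scope ring_scope.
Local Open Scope quotient_scope.

Section MalgAlgebra.
Context (K : monomType) (R : comNzRingType).

Lemma malg_mulCr (c : R) (g : {malg R[K]}) : g * c%:MP = c *: g.
Proof.
rewrite -mul_malgC; apply/malgP => k.
rewrite (@mcoeffMrw _ _ _ _ _ _ k (fsubset_refl _) (msuppC_le c)).
rewrite (@mcoeffMlw _ _ _ _ _ _ k (msuppC_le c) (fsubset_refl _)).
rewrite !big_seq_fset1; apply: eq_bigr => k' _.
by rewrite mulm1 mul1m mulrC.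
Qed.

Lemma malg_scaleAr (c : R) (x y : {malg R[K]}) : c *: (x * y) = x * (c *: y).
Proof. by rewrite -!mul_malgC mulrA [c%:MP * x]mul_malgC -malg_mulCr -mulrA. Qed.

End MalgAlgebra.

Record xmod_data (R : comNzRingType) := XModData {
  xm0 : algType R;
  xm1 : lmodType R;
  xmul1 : xm1 -> xm1 -> xm1;
  xlact : xm0 -> xm1 -> xm1;
  xract : xm1 -> xm0 -> xm1;
  xdelta : xm1 -> xm0
}.

Arguments xmul1 {R} _ _ _.
Arguments xlact {R} _ _ _.
Arguments xract {R} _ _ _.
Arguments xdelta {R} _ _.

Definition is_linear (R : nzRingType) (U W : lmodType R) (f : U -> W) : Prop :=
  forall (c : R) (x y : U), f (c *: x + y) = c *: f x + f y.

Definition is_bilinear (R : nzRingType) (U1 U2 W : lmodType R)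
  (f : U1 -> U2 -> W) : Prop :=
  (forall y, is_linear (fun x => f x y)) /\ (forall x, is_linear (f x)).

Definition is_xmod (R : comNzRingType) (A : xmod_data R) : Prop :=
  is_bilinear (xmul1 A) /\ associative (xmul1 A) /\
  is_bilinear (xlact A) /\ is_bilinear (xract A) /\
  (forall (a b : xm0 A) E, xlact A (a * b) E = xlact A a (xlact A b E)) /\
  (forall E, xlact A 1 E = E) /\
  (forall (a b : xm0 A) E, xract A E (a * b) = xract A (xract A E a) b) /\
  (forall E, xract A E 1 = E) /\
  (forall (a b : xm0 A) E, xract A (xlact A a E) b = xlact A a (xract A E b)) /\
  (forall a E F, xlact A a (xmul1 A E F) = xmul1 A (xlact A a E) F) /\
  (forall a E F, xract A (xmul1 A E F) a = xmul1 A E (xract A F a)) /\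
  (forall a b E F, xmul1 A (xract A E a) (xlact A b F)
                   = xmul1 A E (xlact A (a * b) F)) /\
  (forall a b E F, xmul1 A E (xlact A (a * b) F)
                   = xmul1 A (xract A E (a * b)) F) /\
  is_linear (xdelta A) /\
  (forall E F, xdelta A (xmul1 A E F) = xdelta A E * xdelta A F) /\
  (forall a E, xdelta A (xlact A a E) = a * xdelta A E) /\
  (forall a E, xdelta A (xract A E a) = xdelta A E * a) /\
  (forall E F, xlact A (xdelta A E) F = xmul1 A E F) /\
  (forall E F, xract A E (xdelta A F) = xmul1 A E F).

Definition is_xmod_morph (R : comNzRingType) (A B : xmod_data R)
  (f0 : xm0 A -> xm0 B) (f1 : xm1 A -> xm1 B) : Prop :=
  [/\ is_linear f0 /\ f0 1 = 1 /\ (forall a b, f0 (a * b) = f0 a * f0 b),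
      is_linear f1 /\ (forall E F, f1 (xmul1 A E F) = xmul1 B (f1 E) (f1 F)),
      (forall E, xdelta B (f1 E) = f0 (xdelta A E)),
      (forall a E, f1 (xlact A a E) = xlact B (f0 a) (f1 E)) &
      (forall a E, f1 (xract A E a) = xract B (f1 E) (f0 a))].

Arguments is_xmod_morph {R} A B f0 f1.

(* 2-connections on V valued in A.  A linear map gamma : Λ²V -> A1 is
   represented by the corresponding alternating bilinear map V x V -> A1,
   gamma v w = gamma(v ∧ w). *)
Definition is_2connection (R : comNzRingType) (V : lmodType R)
  (A : xmod_data R) (alpha : V -> xm0 A) (gamma : V -> V -> xm1 A) : Prop :=
  [/\ is_linear alpha, is_bilinear gamma, (forall v, gamma v v = 0) &
      (forall v w, xdelta A (gamma v w) = alpha v * alpha w - alpha w * alpha v)].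

Section TV.
Context (R : fieldType) (V : vectType R).

Local Notation n := (\dim {: V}).
Definition vcoord (i : 'I_n) (v : V) : R := coord (vbasis {: V}) i v.

(* words in the basis vectors: basis of T_0(V) = ⊕_k V^{⊗k} *)
Definition word := {fmonom 'I_n}.
Definition T0_type := {malg R[word]}.
HB.instance Definition _ := GRing.Lalgebra.on T0_type.
HB.instance Definition _ :=
  GRing.Lalgebra_isAlgebra.Build R T0_type (@malg_scaleAr word R).
Definition T0 : algType R := T0_type.

Definition zeta (v : V) : T0 := \sum_(i < n) vcoord i v *: << fmu i >>.

(* basis e_i ∧ e_j (i < j) of Λ²V *)
Definition wedge_idx := {ij : 'I_n * 'I_n | (ij.1 < ij.2)%N}.
(* basis of the free bimodule T_0(V) ⊗ Λ²V ⊗ T_0(V) *)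
Definition fbkey := (word * wedge_idx * word)%type.
Definition FB : lmodType R := {malg R[fbkey]}.

Definition fb_gen (u : word) (p : wedge_idx) (w : word) : FB := << (u, p, w) >>.

Definition fb_lact (a : T0) (E : FB) : FB :=
  \sum_(u <- msupp a) \sum_(k <- msupp E)
     (a@_u * E@_k) *: fb_gen (mmul u k.1.1) k.1.2 k.2.
Definition fb_ract (E : FB) (b : T0) : FB :=
  \sum_(k <- msupp E) \sum_(u <- msupp b)
     (E@_k * b@_u) *: fb_gen k.1.1 k.1.2 (mmul k.2 u).

Definition wcomm (p : wedge_idx) : T0 :=
  << fmu (val p).1 >> * << fmu (val p).2 >>
  - << fmu (val p).2 >> * << fmu (val p).1 >>.
Definition fb_delta (E : FB) : T0 :=
  \sum_(k <- msupp E) E@_k *: (<< k.1.1 >> * wcomm k.1.2 * << k.2 >>).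

Definition Pf (x : FB) : Prop :=
  exists s : seq (R * FB * FB),
    x = \sum_(t <- s) t.1.1 *: (fb_lact (fb_delta t.1.2) t.2
                               - fb_ract t.1.2 (fb_delta t.2)).

Lemma Pf0 : Pf 0.
Proof. by exists [::]; rewrite big_nil. Qed.

Lemma PfZ c x : Pf x -> Pf (c *: x).
Proof.
case=> s ->; exists [seq (c * t.1.1, t.1.2, t.2) | t <- s].
by rewrite big_map scaler_sumr; apply: eq_bigr => t _; rewrite scalerA.
Qed.

Lemma PfD x y : Pf x -> Pf y -> Pf (x + y).
Proof. by case=> s -> [s' ->]; exists (s ++ s'); rewrite big_cat. Qed.

Lemma PfN x : Pf x -> Pf (- x).
Proof. by move=> /(PfZ (-1)); rewrite scaleN1r. Qed.

Definition pf_rel : rel FB := fun x y => `[< Pf (x - y) >].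

Lemma pf_refl : reflexive pf_rel.
Proof. by move=> x; apply/asboolP; rewrite subrr; exact: Pf0. Qed.

Lemma pf_sym : symmetric pf_rel.
Proof.
move=> x y; apply/asboolP/asboolP => /PfN; by rewrite opprB.
Qed.

Lemma pf_trans : transitive pf_rel.
Proof.
move=> y x z /asboolP h1 /asboolP h2; apply/asboolP.
by have := PfD h1 h2; rewrite addrA subrK.
Qed.

Canonical pf_equiv := EquivRel pf_rel pf_refl pf_sym pf_trans.

Definition T1_type := {eq_quot pf_equiv}.
HB.instance Definition _ := Choice.copy T1_type {eq_quot pf_equiv}.
HB.instance Definition _ := Quotient.copy T1_type {eq_quot pf_equiv}.

Local Notation piT := (\pi_T1_type).

Definition T1_zero : T1_type := piT 0.
Definition T1_add (x y : T1_type) : T1_type := piT (repr x + repr y).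
Definition T1_opp (x : T1_type) : T1_type := piT (- repr x).
Definition T1_scale (c : R) (x : T1_type) : T1_type := piT (c *: repr x).

Lemma piTP (x y : FB) : piT x = piT y <-> Pf (x - y).
Proof.
split; first by move=> /eqquotP /asboolP.
by move=> h; apply/eqquotP/asboolP.
Qed.

Lemma reprP (x : FB) : Pf (repr (piT x) - x).
Proof. by apply/piTP; rewrite reprK. Qed.

Lemma T1_addE (x y : FB) : T1_add (piT x) (piT y) = piT (x + y).
Proof.
apply/piTP; have := PfD (reprP x) (reprP y).
by rewrite addrACA opprD.
Qed.

Lemma T1_oppE (x : FB) : T1_opp (piT x) = piT (- x).
Proof. by apply/piTP; have := PfN (reprP x); rewrite opprB opprK addrC. Qed.

Lemma T1_scaleE c (x : FB) : T1_scale c (piT x) = piT (c *: x).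
Proof. by apply/piTP; have := PfZ c (reprP x); rewrite scalerBr. Qed.

Lemma T1_addA : associative T1_add.
Proof.
move=> x y z; elim/(@quotW _ T1_type): x => x; elim/(@quotW _ T1_type): y => y; elim/(@quotW _ T1_type): z => z.
by rewrite !T1_addE addrA.
Qed.

Lemma T1_addC : commutative T1_add.
Proof.
move=> x y; elim/(@quotW _ T1_type): x => x; elim/(@quotW _ T1_type): y => y.
by rewrite !T1_addE addrC.
Qed.

Lemma T1_add0 : left_id T1_zero T1_add.
Proof. by move=> x; elim/(@quotW _ T1_type): x => x; rewrite /T1_zero T1_addE add0r. Qed.

Lemma T1_addN : left_inverse T1_zero T1_opp T1_add.
Proof. by move=> x; elim/(@quotW _ T1_type): x => x; rewrite T1_oppE T1_addE addNr. Qed.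

HB.instance Definition _ :=
  GRing.isZmodule.Build T1_type T1_addA T1_addC T1_add0 T1_addN.

Lemma T1_addE' (x y : FB) : piT x + piT y = piT (x + y) :> T1_type.
Proof. exact: T1_addE. Qed.

Lemma T1_scaleA a b (x : T1_type) :
  T1_scale a (T1_scale b x) = T1_scale (a * b) x.
Proof. by elim/(@quotW _ T1_type): x => x; rewrite !T1_scaleE scalerA. Qed.

Lemma T1_scale1 : left_id 1 T1_scale.
Proof. by move=> x; elim/(@quotW _ T1_type): x => x; rewrite T1_scaleE scale1r. Qed.

Lemma T1_scaleDr : right_distributive T1_scale +%R.
Proof.
move=> a x y; elim/(@quotW _ T1_type): x => x; elim/(@quotW _ T1_type): y => y.
by rewrite T1_addE' !T1_scaleE T1_addE' scalerDr.
Qed.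

Lemma T1_scaleDl (x : T1_type) :
  {morph T1_scale ^~ x : a b / a + b}.
Proof.
elim/(@quotW _ T1_type): x => x a b.
by rewrite !T1_scaleE T1_addE' scalerDl.
Qed.

HB.instance Definition _ :=
  GRing.Zmodule_isLmodule.Build R T1_type T1_scaleA T1_scale1 T1_scaleDr
    T1_scaleDl.

Definition T1 : lmodType R := T1_type.

Definition T1_delta (E : T1) : T0 := fb_delta (repr E).
Definition T1_lact (a : T0) (E : T1) : T1 := piT (fb_lact a (repr E)).
Definition T1_ract (E : T1) (b : T0) : T1 := piT (fb_ract (repr E) b).
Definition T1_mul (E F : T1) : T1 := T1_lact (T1_delta E) F.

Definition TV : xmod_data R := XModData T1_mul T1_lact T1_ract T1_delta.

(* Z(v ∧ w) = class of 1 ⊗ (v ∧ w) ⊗ 1, with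
   v ∧ w = \sum_(i<j) (v_i w_j - v_j w_i) e_i ∧ e_j *)
Definition Zu (v w : V) : T1 :=
  piT (\sum_(p : wedge_idx)
         (vcoord (val p).1 v * vcoord (val p).2 w
          - vcoord (val p).2 v * vcoord (val p).1 w)
         *: fb_gen (mone : word) p (mone : word)).

End TV.

(* Main.v *)
Require Import Defs.
From HB Require Import structures.
From mathcomp Require Import all_boot all_algebra finmap generic_quotient.
From mathcomp.multinomials Require Import monalg.
From mathcomp.classical Require Import boolp.
From mathcomp Require Import reals.
Set Implicit Arguments.
Unset Strict Implicit.
Unset Printing Implicit Defensive.
Import GRing.Theory.
Local Open Scope fset_scope.
Local Open Scope ring_scope.
Local Open Scope quotient_scope.

Section Lin.
Context (R : comNzRingType).

Lemma lin0 (U W : lmodType R) (f : U -> W) : is_linear f -> f 0 = 0.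
Proof.
move=> h; have := h 1 0 0; rewrite !scale1r addr0 => e.
by apply: (addrI (f 0)); rewrite addr0 -e.
Qed.

Lemma linD (U W : lmodType R) (f : U -> W) : is_linear f -> forall x y, f (x + y) = f x + f y.
Proof. by move=> h x y; have := h 1 x y; rewrite !scale1r. Qed.

Lemma linZ (U W : lmodType R) (f : U -> W) : is_linear f -> forall c x, f (c *: x) = c *: f x.
Proof. by move=> h c x; rewrite -[c *: x]addr0 h (lin0 h) addr0. Qed.

Lemma linN (U W : lmodType R) (f : U -> W) : is_linear f -> forall x, f (- x) = - f x.
Proof. by move=> h x; rewrite -scaleN1r (linZ h) scaleN1r. Qed.

Lemma linB (U W : lmodType R) (f : U -> W) : is_linear f -> forall x y, f (x - y) = f x - f y.
Proof. by move=> h x y; rewrite (linD h) (linN h). Qed.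

Lemma lin_sum (U W : lmodType R) (f : U -> W) (I : Type) (r : seq I) (P : pred I) (F : I -> U) :
  is_linear f -> f (\sum_(i <- r | P i) F i) = \sum_(i <- r | P i) f (F i).
Proof. by move=> h; apply: (big_morph f (linD h) (lin0 h)). Qed.

Lemma lin_comp (U W X : lmodType R) (f : W -> X) (g : U -> W) :
  is_linear f -> is_linear g -> is_linear (fun x => f (g x)).
Proof. by move=> hf hg c x y; rewrite hg hf. Qed.

Lemma lin_eqf (U W : lmodType R) (f g : U -> W) :
  (forall x, f x = g x) -> is_linear g -> is_linear f.
Proof. by move=> e h c x y; rewrite !e h. Qed.

Lemma lin_add (U W : lmodType R) (f g : U -> W) :
  is_linear f -> is_linear g -> is_linear (fun x => f x + g x).
Proof.
by move=> hf hg c x y; rewrite hf hg scalerDr addrACA.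
Qed.

Lemma lin_sub (U W : lmodType R) (f g : U -> W) :
  is_linear f -> is_linear g -> is_linear (fun x => f x - g x).
Proof.
by move=> hf hg c x y; rewrite hf hg scalerBr addrACA opprD.
Qed.

Lemma lin_id (U : lmodType R) : is_linear (fun x : U => x).
Proof. by []. Qed.

Lemma lin_mulr (A : algType R) (y : A) : is_linear (fun x : A => x * y).
Proof. by move=> c x z; rewrite mulrDl scalerAl. Qed.

Lemma lin_mull (A : algType R) (y : A) : is_linear (fun x : A => y * x).
Proof. by move=> c x z; rewrite mulrDr scalerAr. Qed.

Lemma lin_sumf (U W : lmodType R) (I : Type) (r : seq I) (F : I -> U -> W) :
  (forall i, is_linear (F i)) -> is_linear (fun x => \sum_(i <- r) F i x).
Proof.
move=> h c x y; rewrite scaler_sumr -big_split; apply: eq_bigr => i _; exact: h.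
Qed.

Lemma lin_scale (U W : lmodType R) (a : R) (f : U -> W) :
  is_linear f -> is_linear (fun x => a *: f x).
Proof. by move=> h c x y; rewrite h scalerDr !scalerA mulrC. Qed.

End Lin.

Section Ext.
Context (R : comNzRingType) (K : choiceType) (M : lmodType R).

Definition ext (h : K -> M) (g : {malg R[K]}) : M :=
  \sum_(k <- msupp g) g@_k *: h k.

Lemma extEw (h : K -> M) (d : {fset K}) g : msupp g `<=` d ->
  ext h g = \sum_(k <- d) g@_k *: h k.
Proof.
move=> le; rewrite /ext (big_fset_incl _ le) //= => x xd /mcoeff_outdom ->.
by rewrite scale0r.
Qed.

Lemma ext_lin (h : K -> M) : is_linear (ext h).
Proof.
move=> c x y.
have le1 : msupp x `<=` msupp x `|` msupp y by apply: fsubsetUl.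
have le2 : msupp y `<=` msupp x `|` msupp y by apply: fsubsetUr.
have le3 : msupp (c *: x + y) `<=` msupp x `|` msupp y.
  apply: fsubset_trans (msuppD_le _ _) _; apply: fsetSU; exact: msuppZ_le.
rewrite (extEw h le1) (extEw h le2) (extEw h le3) scaler_sumr -big_split.
by apply: eq_bigr => k _; rewrite mcoeffD mcoeffZ scalerDl scalerA.
Qed.

Lemma extU (h : K -> M) k : ext h << k >> = h k.
Proof. by rewrite (extEw h (msuppU_le)) big_seq_fset1 mcoeffUU scale1r. Qed.

Lemma malgU_scale (c : R) k : << c *g k >> = c *: (<< k >> : {malg R[K]}).
Proof. by apply/malgP => k'; rewrite mcoeffZ !mcoeffU mulr_natr. Qed.

Lemma ext_uniq (f : {malg R[K]} -> M) : is_linear f ->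
  forall g, f g = ext (fun k => f << k >>) g.
Proof.
move=> hf g; rewrite {1}(monalgE g) (lin_sum _ _ _ hf) /ext.
by apply: eq_bigr => k _; rewrite malgU_scale (linZ hf).
Qed.

Lemma lin_eq (f g : {malg R[K]} -> M) : is_linear f -> is_linear g ->
  (forall k, f << k >> = g << k >>) -> forall x, f x = g x.
Proof.
move=> hf hg e x; rewrite (ext_uniq hf) (ext_uniq hg).
by apply: eq_bigr => k _; rewrite e.
Qed.

End Ext.

Lemma ext_lin2 (R : comNzRingType) (K1 K2 : choiceType) (M : lmodType R)
  (h : K1 -> K2 -> M) (x : {malg R[K1]}) :
  is_linear (fun y => ext (fun u => ext (h u) y) x).
Proof.
apply: lin_sumf => u; apply: lin_scale; exact: ext_lin.
Qed.

Section Main.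
Context (R : fieldType) (V : vectType R) (A : xmod_data R) (HA : is_xmod A)
  (alpha : V -> xm0 A) (gamma : V -> V -> xm1 A)
  (H2 : is_2connection alpha gamma).

Local Notation n := (\dim {: V}).
Definition e (i : 'I_n) : V := (vbasis {: V})`_i.
Definition aw (u : word V) : xm0 A := \prod_(i <- fmonom_val u) alpha (e i).
Definition F0 (x : T0 V) : xm0 A := ext aw x.
Definition Gam (p : wedge_idx V) : xm1 A := gamma (e (val p).1) (e (val p).2).
Definition Gk (k : fbkey V) : xm1 A :=
  xlact A (F0 << k.1.1 >>) (xract A (Gam k.1.2) (F0 << k.2 >>)).
Definition G (x : FB V) : xm1 A := ext Gk x.

Ltac xm := case: HA => [m_bil [m_assoc [l_bil [r_bil [lM [l1 [rM [r1 [lr [lmul [rmul [mlr [mlr2 [d_lin [dM [dl [dr [p1 p2]]]]]]]]]]]]]]]]]].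

Lemma lactl E : is_linear (fun a => xlact A a E). Proof. by xm; case: l_bil. Qed.
Lemma lactr a : is_linear (xlact A a). Proof. by xm; case: l_bil. Qed.
Lemma ractl a : is_linear (fun E => xract A E a). Proof. by xm; case: r_bil. Qed.
Lemma ractr E : is_linear (xract A E). Proof. by xm; case: r_bil. Qed.
Lemma lactM a b E : xlact A (a * b) E = xlact A a (xlact A b E). Proof. by xm. Qed.
Lemma lact1 E : xlact A 1 E = E. Proof. by xm. Qed.
Lemma ractM a b E : xract A E (a * b) = xract A (xract A E a) b. Proof. by xm. Qed.
Lemma ract1 E : xract A E 1 = E. Proof. by xm. Qed.
Lemma lract a b E : xract A (xlact A a E) b = xlact A a (xract A E b). Proof. by xm. Qed.
Lemma dlin : is_linear (xdelta A). Proof. by xm. Qed.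
Lemma dlact a E : xdelta A (xlact A a E) = a * xdelta A E. Proof. by xm. Qed.
Lemma dract a E : xdelta A (xract A E a) = xdelta A E * a. Proof. by xm. Qed.
Lemma peif1 E F : xlact A (xdelta A E) F = xmul1 A E F. Proof. by xm. Qed.
Lemma peif2 E F : xract A E (xdelta A F) = xmul1 A E F. Proof. by xm. Qed.

Lemma alin : is_linear alpha. Proof. by case: H2. Qed.
Lemma glinl w : is_linear (fun v => gamma v w). Proof. by case: H2 => _ []. Qed.
Lemma glinr v : is_linear (gamma v). Proof. by case: H2 => _ []. Qed.
Lemma galt v : gamma v v = 0. Proof. by case: H2. Qed.
Lemma gdelta v w : xdelta A (gamma v w) = alpha v * alpha w - alpha w * alpha v.
Proof. by case: H2. Qed.

Lemma F0lin : is_linear F0. Proof. exact: ext_lin. Qed.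
Lemma F0U u : F0 << u >> = aw u. Proof. exact: extU. Qed.

Lemma UM (K : monomType) (u v : K) :
  (<< u >> * << v >> : {malg R[K]}) = << mmul u v >>.
Proof. by rewrite malgM_def fgmulUU mulr1. Qed.

Lemma awM u v : aw (mmul u v) = aw u * aw v.
Proof. by rewrite /aw fmM big_cat. Qed.

Lemma aw1 : aw mone = 1.
Proof. by rewrite /aw fm1 big_nil. Qed.

Lemma F0M x y : F0 (x * y) = F0 x * F0 y.
Proof.
move: x; apply: lin_eq => [||u].
- exact: (lin_comp F0lin (lin_mulr y)).
- exact: (lin_comp (lin_mulr (F0 y)) F0lin).
move: y; apply: lin_eq => [||v].
- exact: (lin_comp F0lin (lin_mull _)).
- exact: (lin_comp (lin_mull _) F0lin).
by rewrite UM !F0U awM.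
Qed.

Lemma F01 : F0 1 = 1.
Proof. by rewrite -[1 : T0 V]/(<< mone >>) F0U aw1. Qed.


Definition hl (u : word V) (k : fbkey V) : FB V := fb_gen (mmul u k.1.1) k.1.2 k.2.
Definition hr (k : fbkey V) (u : word V) : FB V := fb_gen k.1.1 k.1.2 (mmul k.2 u).
Definition hd (k : fbkey V) : T0 V := << k.1.1 >> * wcomm k.1.2 * << k.2 >>.

Lemma fb_lactE a E : fb_lact a E = ext (fun u => ext (hl u) E) a.
Proof.
rewrite /fb_lact /ext; apply: eq_bigr => u _; rewrite scaler_sumr.
by apply: eq_bigr => k _; rewrite scalerA.
Qed.

Lemma fb_ractE E b : fb_ract E b = ext (fun k => ext (hr k) b) E.
Proof.
rewrite /fb_ract /ext; apply: eq_bigr => k _; rewrite scaler_sumr.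
by apply: eq_bigr => u _; rewrite scalerA.
Qed.

Lemma fb_deltaE E : fb_delta E = ext hd E.
Proof. by []. Qed.

Lemma lact_lin1 (E : FB V) : is_linear (fun a => fb_lact a E).
Proof. apply: lin_eqf => [a|]; first exact: fb_lactE. exact: ext_lin. Qed.
Lemma lact_lin2 (a : T0 V) : is_linear (fb_lact a).
Proof. apply: lin_eqf => [E|]; first exact: fb_lactE. exact: ext_lin2. Qed.
Lemma ract_lin1 (b : T0 V) : is_linear (fun E => fb_ract E b).
Proof. apply: lin_eqf => [E|]; first exact: fb_ractE. exact: ext_lin. Qed.
Lemma ract_lin2 (E : FB V) : is_linear (fb_ract E).
Proof. apply: lin_eqf => [b|]; first exact: fb_ractE. exact: ext_lin2. Qed.
Lemma delta_lin : is_linear (@fb_delta R V).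
Proof. apply: lin_eqf => [E|]; first exact: fb_deltaE. exact: ext_lin. Qed.

Lemma lactU (u : word V) (k : fbkey V) : fb_lact << u >> << k >> = hl u k.
Proof. by rewrite fb_lactE !extU. Qed.
Lemma ractU (k : fbkey V) (u : word V) : fb_ract << k >> << u >> = hr k u.
Proof. by rewrite fb_ractE !extU. Qed.
Lemma deltaU (k : fbkey V) : fb_delta << k >> = hd k.
Proof. by rewrite fb_deltaE extU. Qed.


Lemma lactG (u v : word V) p (w : word V) : fb_lact << u >> (fb_gen v p w) = fb_gen (mmul u v) p w.
Proof. exact: (lactU u (v,p,w)). Qed.
Lemma ractG (u v : word V) p (w : word V) : fb_ract (fb_gen v p w) << u >> = fb_gen v p (mmul w u).
Proof. exact: (ractU (v,p,w) u). Qed.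
Lemma deltaG (v : word V) p (w : word V) : fb_delta (fb_gen v p w) = << v >> * wcomm p * << w >>.
Proof. exact: (deltaU (v,p,w)). Qed.

Lemma assoc_tail (S : pzRingType) (a b c d e : S) : c * d = e -> a * b * e = a * b * c * d.
Proof. by move<-; rewrite mulrA. Qed.

Lemma lin_eqT0 (M : lmodType R) (f g : T0 V -> M) : is_linear f -> is_linear g ->
  (forall u : word V, f (<< u >> : T0 V) = g << u >>) -> forall x, f x = g x.
Proof. by move=> hf hg ee; apply: lin_eq => // u; exact: ee. Qed.

Lemma lin_eqFB (M : lmodType R) (f g : FB V -> M) : is_linear f -> is_linear g ->
  (forall u p w, f (fb_gen u p w) = g (fb_gen u p w)) -> forall x, f x = g x.
Proof. by move=> hf hg ee; apply: lin_eq => // [[[u p] w]]; exact: ee. Qed.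

Lemma L1 (a b : T0 V) (F : FB V) : fb_lact a (fb_lact b F) = fb_lact (a * b) F.
Proof.
move: a; apply: lin_eq => [||u].
- exact: lact_lin1.
- exact: (lin_comp (lact_lin1 F) (lin_mulr b)).
move: b; apply: lin_eq => [||v].
- exact: (lin_comp (lact_lin2 _) (lact_lin1 F)).
- exact: (lin_comp (lact_lin1 F) (lin_mull _)).
move: F; apply: lin_eqFB => [||x p w].
- exact: (lin_comp (lact_lin2 _) (lact_lin2 _)).
- exact: lact_lin2.
by rewrite !lactG UM lactG mulmA.
Qed.

Lemma L2 (a : T0 V) (E : FB V) : fb_delta (fb_lact a E) = a * fb_delta E.
Proof.
move: a; apply: lin_eq => [||u].
- exact: (lin_comp delta_lin (lact_lin1 E)).
- by move=> c x y /=; rewrite mulrDl scalerAl.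
move: E; apply: lin_eqFB => [||x p w].
- exact: (lin_comp delta_lin (lact_lin2 _)).
- exact: (lin_comp (lin_mull _) delta_lin).
rewrite lactG [LHS]deltaG [in RHS]deltaG.
by rewrite -(UM u x) !mulrA.
Qed.

Lemma L3 (a d : T0 V) (E : FB V) : fb_lact a (fb_ract E d) = fb_ract (fb_lact a E) d.
Proof.
move: a; apply: lin_eq => [||u].
- exact: lact_lin1.
- exact: (lin_comp (ract_lin1 d) (lact_lin1 E)).
move: E; apply: lin_eqFB => [||x p w].
- exact: (lin_comp (lact_lin2 _) (ract_lin1 d)).
- exact: (lin_comp (ract_lin1 d) (lact_lin2 _)).
move: d; apply: lin_eq => [||v].
- exact: (lin_comp (lact_lin2 _) (ract_lin2 _)).
- exact: ract_lin2.
by rewrite [in LHS]ractG [in LHS]lactG [in RHS]lactG [in RHS]ractG.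
Qed.

Lemma R1 (b c : T0 V) (E : FB V) : fb_ract (fb_ract E b) c = fb_ract E (b * c).
Proof.
move: E; apply: lin_eqFB => [||x p w].
- exact: (lin_comp (ract_lin1 c) (ract_lin1 b)).
- exact: ract_lin1.
move: b; apply: lin_eq => [||u].
- exact: (lin_comp (ract_lin1 c) (ract_lin2 _)).
- exact: (lin_comp (ract_lin2 _) (lin_mulr c)).
move: c; apply: lin_eq => [||v].
- exact: ract_lin2.
- exact: (lin_comp (ract_lin2 _) (lin_mull _)).
by rewrite [in LHS]ractG [in LHS]ractG UM [in RHS]ractG mulmA.
Qed.

Lemma R2 (b : T0 V) (E : FB V) : fb_delta (fb_ract E b) = fb_delta E * b.
Proof.
move: b; apply: lin_eq => [||u].
- exact: (lin_comp delta_lin (ract_lin2 E)).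
- by move=> c x y /=; rewrite mulrDr scalerAr.
move: E; apply: lin_eqFB => [||x p w].
- exact: (lin_comp delta_lin (ract_lin1 _)).
- exact: (lin_comp (lin_mulr _) delta_lin).
rewrite ractG [LHS]deltaG [in RHS]deltaG.
exact: (assoc_tail _ _ (UM w u)).
Qed.


Local Notation piT := (\pi_(T1_type V)).

Lemma Pf_lact (a : T0 V) (x : FB V) : Pf x -> Pf (fb_lact a x).
Proof.
case=> s ->; exists [seq (t.1.1, fb_lact a t.1.2, t.2) | t <- s].
rewrite big_map (lin_sum _ _ _ (lact_lin2 a)); apply: eq_bigr => t _ /=.
by rewrite (linZ (lact_lin2 a)) (linB (lact_lin2 a)) L1 -L2 L3.
Qed.

Lemma Pf_ract (b : T0 V) (x : FB V) : Pf x -> Pf (fb_ract x b).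
Proof.
case=> s ->; exists [seq (t.1.1, t.1.2, fb_ract t.2 b) | t <- s].
rewrite big_map (lin_sum _ _ _ (ract_lin1 b)); apply: eq_bigr => t _ /=.
by rewrite (linZ (ract_lin1 b)) (linB (ract_lin1 b)) -L3 R1 -R2.
Qed.

Lemma T1_scaleE' (c : R) (x : FB V) : c *: (piT x : T1 V) = piT (c *: x).
Proof. exact: T1_scaleE. Qed.

Lemma pi_lin : is_linear (fun z : FB V => (piT z : T1 V)).
Proof. by move=> c x y; rewrite T1_scaleE' T1_addE'. Qed.

Lemma T1_lactE (a : T0 V) (z : FB V) : T1_lact a (piT z) = piT (fb_lact a z).
Proof.
apply/piTP; rewrite -(linB (lact_lin2 a)); apply: Pf_lact; exact: reprP.
Qed.

Lemma T1_ractE (b : T0 V) (z : FB V) : T1_ract (piT z) b = piT (fb_ract z b).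
Proof.
apply/piTP; rewrite -(linB (ract_lin1 b)); apply: Pf_ract; exact: reprP.
Qed.

Lemma G_lin : is_linear G. Proof. exact: ext_lin. Qed.

Lemma GG (u : word V) p (w : word V) :
  G (fb_gen u p w) = xlact A (F0 << u >>) (xract A (Gam p) (F0 << w >>)).
Proof. exact: (extU Gk (u, p, w)). Qed.

Lemma awU i : aw (fmu i) = alpha (e i).
Proof. by rewrite /aw fmU big_seq1. Qed.

Lemma G1 (a : T0 V) (E : FB V) : G (fb_lact a E) = xlact A (F0 a) (G E).
Proof.
move: a; apply: lin_eq => [||u].
- exact: (lin_comp G_lin (lact_lin1 E)).
- exact: (lin_comp (lactl (G E)) F0lin).
move: E; apply: lin_eqFB => [||x p w].
- exact: (lin_comp G_lin (lact_lin2 _)).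
- exact: (lin_comp (lactr _) G_lin).
rewrite lactG [LHS]GG [in RHS]GG.
by rewrite -(UM u x) F0M lactM.
Qed.

Lemma G2 (b : T0 V) (E : FB V) : G (fb_ract E b) = xract A (G E) (F0 b).
Proof.
move: b; apply: lin_eq => [||u].
- exact: (lin_comp G_lin (ract_lin2 E)).
- exact: (lin_comp (ractr (G E)) F0lin).
move: E; apply: lin_eqFB => [||x p w].
- exact: (lin_comp G_lin (ract_lin1 _)).
- exact: (lin_comp (ractl _) G_lin).
rewrite ractG [LHS]GG [in RHS]GG.
by rewrite -(UM w u) F0M ractM lract.
Qed.

Lemma F0fmu i : F0 << fmu i >> = alpha (e i).
Proof. by rewrite F0U awU. Qed.

Lemma F0comm (a b : T0 V) : F0 (a * b - b * a) = F0 a * F0 b - F0 b * F0 a.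
Proof. rewrite (linB F0lin); exact: (congr2 (fun x y => x - y) (F0M a b) (F0M b a)). Qed.

Lemma F0wcomm p : F0 (wcomm p) =
  alpha (e (val p).1) * alpha (e (val p).2) - alpha (e (val p).2) * alpha (e (val p).1).
Proof. by rewrite /wcomm F0comm !F0fmu. Qed.

Lemma G3 (E : FB V) : xdelta A (G E) = F0 (fb_delta E).
Proof.
move: E; apply: lin_eqFB => [||u p w].
- exact: (lin_comp dlin G_lin).
- exact: (lin_comp F0lin delta_lin).
by rewrite GG deltaG dlact dract !F0M F0wcomm /Gam gdelta mulrA.
Qed.

Lemma G4 (x : FB V) : Pf x -> G x = 0.
Proof.
case=> s ->; rewrite (lin_sum _ _ _ G_lin) big1 // => t _.
rewrite (linZ G_lin) (linB G_lin) G1 G2.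
move: (t.1.1) (t.1.2) (t.2) => c E F.
have e1 : xlact A (F0 (fb_delta E)) (G F) = xmul1 A (G E) (G F) by rewrite -peif1 G3.
have e2 : xract A (G E) (F0 (fb_delta F)) = xmul1 A (G E) (G F) by rewrite -peif2 G3.
by rewrite e1 e2 subrr scaler0.
Qed.

Definition f1 (x : T1 V) : xm1 A := G (repr x).

Lemma f1_pi (z : FB V) : f1 (piT z) = G z.
Proof.
have := G4 (reprP z); rewrite (linB G_lin) => /eqP; rewrite subr_eq0 => /eqP.
exact.
Qed.


Lemma F0one : F0 << mone >> = 1.
Proof. by rewrite F0U aw1. Qed.

Lemma coordE (i j : 'I_n) : vcoord j (e i) = (i == j)%:R.
Proof. exact: coord_free (basis_free (vbasisP _)). Qed.

Lemma zeta_e i : zeta (e i) = << fmu i >> :> T0 V.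
Proof.
rewrite /zeta (bigD1 i) //= coordE eqxx scale1r big1 ?addr0 // => j ji.
by rewrite coordE eq_sym (negbTE ji) scale0r.
Qed.

Lemma F0zeta v : alpha v = F0 (zeta v).
Proof.
rewrite {1}(coord_vbasis (memvf v)) (lin_sum _ _ _ alin) /zeta (lin_sum _ _ _ F0lin).
apply: eq_bigr => i _; rewrite (linZ alin) (linZ F0lin) F0fmu //.
Qed.

Lemma gDl x y z : gamma (x + y) z = gamma x z + gamma y z.
Proof. exact: (linD (glinl z)). Qed.
Lemma gDr x y z : gamma z (x + y) = gamma z x + gamma z y.
Proof. exact: (linD (glinr z)). Qed.
Lemma gZl c x z : gamma (c *: x) z = c *: gamma x z.
Proof. exact: (linZ (glinl z)). Qed.
Lemma gZr c x z : gamma z (c *: x) = c *: gamma z x.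
Proof. exact: (linZ (glinr z)). Qed.
Lemma gsuml (I : Type) (r : seq I) (F : I -> V) z :
  gamma (\sum_(i <- r) F i) z = \sum_(i <- r) gamma (F i) z.
Proof. exact: (lin_sum _ _ _ (glinl z)). Qed.
Lemma gsumr (I : Type) (r : seq I) (F : I -> V) z :
  gamma z (\sum_(i <- r) F i) = \sum_(i <- r) gamma z (F i).
Proof. exact: (lin_sum _ _ _ (glinr z)). Qed.

Lemma ganti x y : gamma y x = - gamma x y.
Proof.
have := galt (x + y); rewrite gDl !gDr !galt add0r addr0 => /eqP.
by rewrite addr_eq0 => /eqP ->; rewrite opprK.
Qed.

Lemma sum_wedge (M : zmodType) (F : 'I_n * 'I_n -> M) :
  \sum_(p : wedge_idx V) F (val p) = \sum_(ij : 'I_n * 'I_n | (ij.1 < ij.2)%N) F ij.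
Proof.
rewrite [RHS](reindex_omap (val : wedge_idx V -> _) insub); last first.
  by move=> ij lt; rewrite insubT.
by apply: eq_bigl => p; rewrite valK eqxx andbT (valP p).
Qed.

Lemma gamma_expand v w : gamma v w = \sum_(p : wedge_idx V)
  (vcoord (val p).1 v * vcoord (val p).2 w - vcoord (val p).2 v * vcoord (val p).1 w)
    *: Gam p.
Proof.
have step1 : gamma v w = \sum_i \sum_j (vcoord i v * vcoord j w) *: gamma (e i) (e j).
  rewrite {1}(coord_vbasis (memvf v)) {1}(coord_vbasis (memvf w)) gsuml.
  apply: eq_bigr => i _; rewrite gZl gsumr scaler_sumr; apply: eq_bigr => j _.
  by rewrite gZr scalerA.
rewrite step1 pair_bigA /= (bigID (fun ij : 'I_n * 'I_n => (ij.1 < ij.2)%N)) /=.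
rewrite [X in _ + X = _](bigID (fun ij : 'I_n * 'I_n => (ij.2 < ij.1)%N)) /=.
rewrite [X in _ + (_ + X)]big1 ?addr0; last first.
  move=> ij /andP [h1 h2].
  have eij : ij.1 = ij.2.
    apply/val_inj/eqP; rewrite eqn_leq.
    by move: h1 h2; rewrite -!leqNgt => -> ->.
  by rewrite eij galt scaler0.
rewrite [X in _ + X = _](reindex_inj (h := fun ij : 'I_n * 'I_n => (ij.2, ij.1))) /=; last first.
  by move=> [a b] [c d] /= [-> ->].
rewrite [X in _ + X = _](eq_bigl (fun ij : 'I_n * 'I_n => (ij.1 < ij.2)%N)); last first.
  by move=> ij /=; rewrite andbC; case: ltngtP.
rewrite /Gam (sum_wedge (fun ij => (vcoord ij.1 v * vcoord ij.2 w - vcoord ij.2 v * vcoord ij.1 w)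
    *: gamma (e ij.1) (e ij.2))).
rewrite -big_split /=; apply: eq_bigr => ij _.
by rewrite (ganti (e ij.1) (e ij.2)) scalerN scalerBl.
Qed.

Lemma f1Zu v w : gamma v w = f1 (Zu v w).
Proof.
rewrite /Zu f1_pi (lin_sum _ _ _ G_lin) gamma_expand; apply: eq_bigr => p _.
by rewrite (linZ G_lin) GG F0one lact1 ract1.
Qed.

Lemma Zu_e p : Zu (e (val p).1) (e (val p).2) = piT (fb_gen mone p mone).
Proof.
rewrite /Zu; apply: congr1.
have np : ((val p).1 == (val p).2) = false.
  by rewrite -val_eqE; apply: ltn_eqF; exact: (valP p).
rewrite (bigD1 p) //= big1 ?addr0 => [|q qp].
  by rewrite !coordE !eqxx np mul0r subr0 mulr1 scale1r.
have h1 : (((val p).1 == (val q).1) && ((val p).2 == (val q).2)) = false.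
  apply/negbTE; apply: contra qp => /andP [/eqP a /eqP b]; apply/eqP/val_inj.
  by rewrite [val q]surjective_pairing -a -b -surjective_pairing.
have h2 : (((val p).1 == (val q).2) && ((val p).2 == (val q).1)) = false.
  apply/negbTE/negP => /andP [/eqP a /eqP b].
  have := valP q; have := valP p; rewrite /= -a -b => hp hq.
  by have := ltn_trans hp hq; rewrite ltnn.
by rewrite !coordE -!natrM !mulnb h1 h2 subrr scale0r.
Qed.


Lemma main_thm : exists! f : (T0 V -> xm0 A) * (T1 V -> xm1 A),
      is_xmod_morph (TV V) A f.1 f.2 /\
      (forall v : V, alpha v = f.1 (zeta v)) /\
      (forall v w : V, gamma v w = f.2 (Zu v w)).
Proof.
exists (F0, f1); split.
  split; last by split; [exact: F0zeta | exact: f1Zu].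
  split => /=.
  - by split; [exact: F0lin | split; [exact: F01 | exact: F0M]].
  - split.
      move=> c x y.
      elim/(@quotW _ (T1_type V)): x => x; elim/(@quotW _ (T1_type V)): y => y.
      have -> : c *: (piT x : T1 V) + piT y = piT (c *: x + y).
        by rewrite T1_scaleE' T1_addE'.
      exact: (etrans (f1_pi _) (etrans (G_lin c x y)
        (congr2 (fun a b => c *: a + b) (esym (f1_pi x)) (esym (f1_pi y))))).
    move=> E F /=; rewrite /T1_mul /T1_lact [in LHS]f1_pi G1 -G3 peif1.
    by [].
  - by move=> E /=; exact: G3.
  - by move=> a E /=; rewrite /T1_lact [in LHS]f1_pi; exact: G1.
  - by move=> a E /=; rewrite /T1_ract [in LHS]f1_pi; exact: G2.
move=> [g0 g1] /= [[[g0lin [g01 g0M]] [g1lin g1M] gd gl gr] [hz hZ]].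
have gu : forall i, g0 << fmu i >> = alpha (e i).
  by move=> i; rewrite hz zeta_e.
have e0 : forall x, F0 x = g0 x.
  apply: lin_eqT0 => [||u]; [exact: F0lin | exact: g0lin | rewrite F0U].
  case: u => s; elim: s => [|i s IH].
    have -> : (<< FMonom [::] >> : T0 V) = 1 by rewrite -fmoneE.
    by rewrite g01 /aw /= big_nil.
  have -> : FMonom (i :: s) = mmul (fmu i) (FMonom s).
    by apply: val_inj; rewrite /= fmM fmU.
  by rewrite -UM g0M gu -IH awM awU.
have e1 : forall z, G z = g1 (piT z).
  apply: lin_eqFB => [||u p w].
  - exact: G_lin.
  - exact: (lin_comp g1lin pi_lin).
  rewrite GG.
  have -> : (piT (fb_gen u p w) : T1 V) =
      T1_lact << u >> (T1_ract (Zu (e (val p).1) (e (val p).2)) << w >>).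
    by rewrite Zu_e T1_ractE T1_lactE ractG lactG mul1m mulm1.
  by rewrite gl gr -hZ -(e0 << u >>) -(e0 << w >>).
have e1' : forall x, f1 x = g1 x.
  move=> x; rewrite -[x]reprK; exact: (etrans (f1_pi _) (e1 _)).
by rewrite (funext e0) (funext e1').
Qed.

End Main.

Theorem proposition4p6 (R : realType) (V : vectType R) (A : xmod_data R) :
  is_xmod A ->
  forall (alpha : V -> xm0 A) (gamma : V -> V -> xm1 A),
    is_2connection alpha gamma ->
    exists! f : (T0 V -> xm0 A) * (T1 V -> xm1 A),
      is_xmod_morph (TV V) A f.1 f.2 /\
      (forall v : V, alpha v = f.1 (zeta v)) /\
      (forall v w : V, gamma v w = f.2 (Zu v w)).
Proof. move=> HA alpha gamma H2; exact: (main_thm HA H2). Qed.
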